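(* Let $\varrho$ be a normalized proximate order of order $\rho>0$. Then for every $0<\sigma'<\sigma$ there exists a constant $C(\sigma,\sigma')$ such that $$\|x^\ell\|_{\varrho,\sigma}\le C(\sigma,\sigma')\frac{G_{\varrho,\ell}}{\sigma'^{\ell/\rho}}\qquad\text{for all }\ell\in\mathbb{N}_0.$$
   Context: Paravectors $x=x_0+\sum_{\ell=1}^nx_\ell e_\ell$ in the Clifford algebra $\mathbb{R}_n$ are identified with $\mathbb{R}^{n+1}$, and $|x|$ is the Euclidean norm; $x^\ell$ is the monomial function. A proximate order is a differentiable $\varrho:[0,\infty)\to[0,\infty)$ with $\lim_{r\to\infty}\varrho(r)=\rho>0$ and $\lim_{r\to\infty}\varrho'(r)r\ln r=0$; normalized means $r\mapsto r^{\varrho(r)}$ is strictly increasing on $(0,\infty)$ and tends to $0$ as $r\to0^+$; $\varphi$ is the inverse of $r\mapsto r^{\varrho(r)}$, and $G_{\varrho,0}=1$, $G_{\varrho,\ell}=\varphi(\ell)^\ell/(e\rho)^{\ell/\rho}$ for $\ell\in\mathbb{N}$. For a function $f$ on $\mathbb{R}^{n+1}$ with values in $\mathbb{R}_n$, $\|f\|_{\varrho,\sigma}=\sup_{x\in\mathbb{R}^{n+1}}|f(x)|e^{-\sigma|x|^{\varrho(|x|)}}$. *)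

(* Defs.v *)
From HB Require Import structures.
From mathcomp Require Import all_boot all_order all_algebra.
From mathcomp Require Import all_classical all_reals all_analysis.
Set Implicit Arguments. Unset Strict Implicit. Unset Printing Implicit Defensive.
Import Order.TTheory GRing.Theory Num.Theory.
Import numFieldNormedType.Exports.
Local Open Scope classical_set_scope.
Local Open Scope ring_scope.

(* An element is given by its coordinates on the basis e_A, A ⊆ {1..n}
   (here the generators are indexed by 'I_n, i.e. e_{i+1} <-> i : 'I_n). *)
Section Clifford.
Variables (R : realType) (n : nat).

Definition cliff := {ffun {set 'I_n} -> R}.

(* sign of e_A e_B = sign * e_{A Δ B} *)
Definition cl_sign (A B : {set 'I_n}) : R :=
  (-1) ^+ (#|[set p : 'I_n * 'I_n | [&& p.1 \in A, p.2 \in B & (p.2 < p.1)%N]]|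
           + #|A :&: B|).

Definition symdiff (A B : {set 'I_n}) : {set 'I_n} := (A :\: B) :|: (B :\: A).

Definition cl_mul (u v : cliff) : cliff :=
  [ffun C => \sum_(A : {set 'I_n}) \sum_(B : {set 'I_n})
               (if symdiff A B == C then cl_sign A B * u A * v B else 0)].

Definition cl_one : cliff := [ffun A => (A == finset.set0)%:R].

Definition cl_pow (u : cliff) (l : nat) : cliff := iter l (cl_mul u) cl_one.

Definition cl_norm (u : cliff) : R := Num.sqrt (\sum_(A : {set 'I_n}) u A ^+ 2).

(* paravector x = x_0 + sum_l x_l e_l, with x = (x_0,...,x_n) in R^(n+1) *)
Definition paravec (x : 'rV[R]_(n.+1)) : cliff :=
  [ffun A => if A == finset.set0 then x ord0 ord0
             else if [pick i in A] is Some i then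
                    (if A == finset.set1 i then x ord0 (lift ord0 i) else 0)
                  else 0].

Definition eucl (x : 'rV[R]_(n.+1)) : R := Num.sqrt (\sum_(i < n.+1) x ord0 i ^+ 2).

End Clifford.

Section Proximate.
Variable R : realType.

Definition proximate_order (vr : R -> R) (rho : R) : Prop :=
  (forall r, 0 < r -> derivable vr r 1) /\
  cvg ((fun h => h^-1 * (vr h - vr 0)) @ 0^'+) /\
  (forall r, 0 <= r -> 0 <= vr r) /\
  0 < rho /\
  vr @ +oo --> rho /\
  (fun r => derive1 vr r * r * ln r) @ +oo --> 0.

Definition normalized_po (vr : R -> R) : Prop :=
  (forall r s, 0 < r -> r < s -> r `^ vr r < s `^ vr s) /\
  (fun r => r `^ vr r) @ 0^'+ --> 0.

(* phi = inverse of r |-> r^{vr(r)} on (0, oo) *)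
Definition po_inv (vr : R -> R) (y : R) : R :=
  xget 0 [set r | 0 < r /\ r `^ vr r = y].

Definition G_po (vr : R -> R) (rho : R) (l : nat) : R :=
  if l == 0%N then 1
  else po_inv vr l%:R ^+ l / (expR 1 * rho) `^ (l%:R / rho).

Definition po_norm (n : nat) (vr : R -> R) (sigma : R)
    (f : 'rV[R]_(n.+1) -> cliff R n) : \bar R :=
  ereal_sup [set (cl_norm (f x) * expR (- (sigma * (eucl x) `^ vr (eucl x))))%:E
            | x in [set: 'rV[R]_(n.+1)]].

End Proximate.

(* Main.v *)
Require Import Defs.
From HB Require Import structures.
From mathcomp Require Import all_boot all_order all_algebra.
From mathcomp Require Import all_classical all_reals all_analysis.
From mathcomp Require Import ring lra.
Import Order.TTheory GRing.Theory Num.Theory.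
Import numFieldNormedType.Exports.
Local Open Scope classical_set_scope.
Local Open Scope ring_scope.
Set Implicit Arguments. Unset Strict Implicit. Unset Printing Implicit Defensive.
Section An.
Variable R : realType.

Lemma ln_le_sub1 (u : R) : 0 < u -> ln u <= u - 1.
Proof. move=> u0; have := expR_ge1Dx (ln u); rewrite lnK //; lra. Qed.

Lemma key_ineq (k s t : R) : 0 < k -> 0 < s ->
  k * t - s * expR t <= k * ln k - k * ln s - k.
Proof.
move=> k0 s0.
have u0 : 0 < s * expR t / k by rewrite divr_gt0 // mulr_gt0 // expR_gt0.
have := ln_le_sub1 u0.
rewrite lnM; last 2 first.
- by rewrite posrE mulr_gt0 // expR_gt0.
- by rewrite posrE invr_gt0.
rewrite lnM ?posrE ?expR_gt0 // lnV ?posrE // expRK.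
move=> H.
have := ler_wpM2l (ltW k0) H.
have -> : k * (s * expR t / k - 1) = s * expR t - k by field; lra.
lra.
Qed.

Lemma cont_h (k0 s s' : R) : 0 < k0 -> 0 < s' -> s' < s ->
  exists2 d, 0 < d & d <= k0 / 2 /\ forall e, `|e| <= d ->
    (k0 + e) * ln (k0 + e) - (k0 + e) * ln s - (k0 + e) <= k0 * ln k0 - k0 * ln s' - k0.
Proof.
move=> k00 s'0 ss'.
have s0 : 0 < s by lra.
set g0 := ln s - ln s'.
have g00 : 0 < g0 by rewrite /g0 subr_gt0 ltr_ln ?posrE.
set L := ln k0 - ln s.
have La : 0 < `|L| + 2 by rewrite ltr_wpDl.
exists (Num.min (k0 / 2) (k0 * g0 / (`|L| + 2))).
  by rewrite lt_min divr_gt0 //= divr_gt0 // mulr_gt0.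
split; first by rewrite ge_min lexx.
move=> e; rewrite le_min => /andP[e1 e2].
have ek : `|e| <= k0 / 2 by [].
have /andP[ea eb] : - (k0 / 2) <= e <= k0 / 2 by rewrite -ler_norml.
have k0e : 0 < k0 + e by lra.
have Hl : ln (k0 + e) <= ln k0 + e / k0.
  have := ln_le_sub1 (divr_gt0 k0e k00).
  rewrite ln_div ?posrE //.
  have -> : (k0 + e) / k0 - 1 = e / k0 by field; lra.
  lra.
have H1 : (k0 + e) * ln (k0 + e) <= (k0 + e) * (ln k0 + e / k0) by rewrite ler_wpM2l // ltW.
have H2 : e * L <= `|e| * `|L| by rewrite -normrM ler_norm.
have H3 : `|e| * (`|L| + 2) <= k0 * g0.
  by rewrite -ler_pdivlMr.
have H4 : e * e / k0 <= `|e| / 2.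
  have ee : `|e| * `|e| = e * e by rewrite -normrM ger0_norm // -expr2 sqr_ge0.
  rewrite ler_pdivrMr //.
  have ae : 0 <= `|e| by [].
  nra.
have E : (k0 + e) * (ln k0 + e / k0) = k0 * ln k0 + e * ln k0 + e + e * e / k0.
  by field; lra.
rewrite E in H1.
rewrite /g0 /L in H2 H3.
have ae : 0 <= `|e| by [].
have aL : 0 <= `|L| by [].
nra.
Qed.
End An.
Section An2.
Variable R : realType.

Lemma lam_deriv (vr : R -> R) (g t : R) : 0 < t -> derivable vr t 1 ->
  is_derive t 1 (fun r => vr r * ln r - g * ln r) (derive1 vr t * ln t + vr t / t - g / t).
Proof.
move=> t0 dv.
have hv := derivableP dv.
have hl := is_derive1_ln t0.
have := derive.is_deriveB (derive.is_deriveM hv hl) (derive.is_deriveZ g hl).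
move=> H; apply: is_derive_eq H _.
rewrite derive1E.
change (vr t * t^-1 + ln t * 'D_1 vr t - g * t^-1 = 'D_1 vr t * ln t + vr t / t - g / t).
ring.
Qed.

Lemma near_sum vr rho (b g : R) : proximate_order vr rho -> b < rho -> rho < g ->
  exists M : R, forall x, M < x -> b < derive1 vr x * x * ln x + vr x < g.
Proof.
move=> [_ [_ [_ [_ [Hl1 Hl2]]]]] brho rhog.
have Hs : (fun r => derive1 vr r * r * ln r + vr r) @ +oo --> rho.
  have := cvgD Hl2 Hl1; rewrite add0r; apply; exact: filter_on_Filter.
have H1 := cvgr_lt _ Hs _ rhog.
have H2 := cvgr_gt _ Hs _ brho.
have [M [_ HM]] := filterI (H1 _) (H2 _).
exists M => x Mx; have [/= a1 a2] := HM x Mx.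
by rewrite a1 a2.
Qed.

Lemma mono_aux vr rho (c : R) (R0 : R) (sgn : bool) : proximate_order vr rho -> 0 < R0 ->
  (forall t, R0 < t -> if sgn then derive1 vr t * t * ln t + vr t <= c
                      else c <= derive1 vr t * t * ln t + vr t) ->
  forall x y, R0 <= x -> x <= y ->
  if sgn then vr y * ln y - c * ln y <= vr x * ln x - c * ln x
  else vr x * ln x - c * ln x <= vr y * ln y - c * ln y.
Proof.
move=> PO R00 Hs.
have dv t : 0 < t -> derivable vr t 1 by case: PO => H _ t0; exact: H.
have D t : R0 < t -> is_derive t 1 (fun r => vr r * ln r - c * ln r)
      (derive1 vr t * ln t + vr t / t - c / t).
  by move=> Rt; apply: lam_deriv; [lra | apply: dv; lra].
have Ev t : R0 < t -> derive1 (fun r => vr r * ln r - c * ln r) t =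
     (derive1 vr t * t * ln t + vr t - c) / t.
  move=> Rt; have HD := D t Rt; rewrite derive1E derive_val; field; lra.
have Dv t : t \in `]R0, +oo[ -> derivable (fun r => vr r * ln r - c * ln r) t 1.
  by rewrite in_itv /= andbT => Rt; have HD := D t Rt; exact: ex_derive.
have Ct : {within `[R0, +oo[, continuous (fun r => vr r * ln r - c * ln r)}.
  apply: continuous_in_subspaceT => t; rewrite inE /= in_itv /= andbT => Rt.
  have t0 : 0 < t by lra.
  have dl := is_derive1_ln t0.
  have dd : derivable (fun r => vr r * ln r - c * ln r) t 1.
    have HD := lam_deriv c t0 (dv t t0); exact: ex_derive.
  exact/differentiable_continuous/derivable1_diffP.
case: sgn Hs => Hs.
  apply: ler0_derive1_nincry => // t; rewrite in_itv /= andbT => Rt.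
  rewrite Ev //; apply: mulr_le0_ge0; first by have := Hs t Rt; lra.
  by rewrite invr_ge0; lra.
apply: ger0_derive1_ndecry => // t; rewrite in_itv /= andbT => Rt.
rewrite Ev //; apply: mulr_ge0; first by have := Hs t Rt; lra.
by rewrite invr_ge0; lra.
Qed.

Lemma po_growth vr rho (b g : R) : proximate_order vr rho -> b < rho -> rho < g ->
  exists2 R0 : R, 1 <= R0 & forall x y, R0 <= x -> x <= y ->
    b * (ln y - ln x) <= vr y * ln y - vr x * ln x <= g * (ln y - ln x).
Proof.
move=> PO brho rhog.
have [M HM] := near_sum PO brho rhog.
exists (Num.max 1 (M + 1)); first by rewrite le_max lexx.
move=> x y Rx xy.
have R0 : 0 < Num.max 1 (M + 1) by rewrite lt_max ltr01.
have HM' t : Num.max 1 (M + 1) < t -> b < derive1 vr t * t * ln t + vr t < g.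
  by move=> Rt; apply: HM; move: Rt; rewrite gt_max => /andP[_]; lra.
have U := mono_aux (c := g) (sgn := true) PO R0 (fun t Rt => ltW (proj2 (andP (HM' t Rt)))) Rx xy.
have L := mono_aux (c := b) (sgn := false) PO R0 (fun t Rt => ltW (proj1 (andP (HM' t Rt)))) Rx xy.
simpl in U, L.
apply/andP; split; lra.
Qed.
End An2.
Section An3.
Variable R : realType.

Lemma V_le (vr : R -> R) a b : normalized_po vr -> 0 < a -> 0 < b ->
  a `^ vr a <= b `^ vr b -> a <= b.
Proof.
move=> [Hm _] a0 b0 H; rewrite leNgt; apply/negP => ba.
by have := Hm b a b0 ba; rewrite ltNge H.
Qed.

Lemma powR_pos (a e : R) : 0 < a -> a `^ e = expR (e * ln a).
Proof. by move=> a0; rewrite /powR gt_eqF. Qed.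

Lemma cont_W (vr : R -> R) rho t : proximate_order vr rho -> 0 < t ->
  {for t, continuous (fun r => expR (vr r * ln r))}.
Proof.
move=> [dv _] t0.
apply: (@continuous_comp _ _ _ (fun r => vr r * ln r) expR); last exact: continuous_expR.
apply: continuousM; last exact: continuous_ln.
exact/differentiable_continuous/derivable1_diffP/dv.
Qed.

Lemma po_inv_spec (vr : R -> R) rho y : proximate_order vr rho -> normalized_po vr -> 1 <= y ->
  0 < po_inv vr y /\ po_inv vr y `^ vr (po_inv vr y) = y.
Proof.
move=> PO NO y1.
suff : exists a, 0 < a /\ a `^ vr a = y by move=> ex; exact: (xgetPex 0 ex).
have rho0 : 0 < rho by case: PO => _ [_ [_ [? _]]].
have [R0 R01 HG] := po_growth (b := rho / 2) (g := rho * 2) PO ltac:(lra) ltac:(lra).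
have R00 : 0 < R0 by lra.
have [e [e0 Ve]] : exists e, 0 < e /\ e `^ vr e < 1.
  case: NO => _ Hl.
  have H3 : \forall t \near 0^'+, t `^ vr t < 1 /\ 0 < t.
    near=> t; split; last by near: t; exact: nbhs_right_gt.
    near: t; exact: (cvgr_lt _ Hl _ ltr01).
  have [e He] := @filter_ex _ _ (at_right_proper_filter (0:R)) _ H3.
  by exists e; case: He.
set L := vr R0 * ln R0.
set X := expR (ln R0 + `|ln y - L| / (rho / 2)).
have X0 : 0 < X by exact: expR_gt0.
have lnX : ln X = ln R0 + `|ln y - L| / (rho / 2) by rewrite expRK.
have RX : R0 <= X.
  have E : R0 = expR (ln R0) by rewrite lnK // posrE.
  rewrite {1}E /X ler_expR lerDl divr_ge0 //; lra.
have [/= HX _] := andP (HG R0 X (lexx _) RX).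
have lamX : ln y <= vr X * ln X.
  have : `|ln y - L| = rho / 2 * (ln X - ln R0) by rewrite lnX; field; lra.
  have := ler_norm (ln y - L).
  rewrite /L in HX *; lra.
have VX : y <= X `^ vr X.
  rewrite powR_pos // -[y]lnK ?posrE; last lra.
  by rewrite ler_expR.
have eX : e < X.
  rewrite ltNge; apply/negP => Xe.
  have : X `^ vr X <= e `^ vr e.
    case: (ltgtP X e) Xe => // [Xe' _| -> _]; last exact: lexx.
    apply: ltW; exact: (proj1 NO) X e X0 Xe'.
  lra.
have [c cin Wc] : exists2 c, c \in `[e, X] & expR (vr c * ln c) = y.
  apply: IVT; first exact: ltW.
    apply: continuous_in_subspaceT => t; rewrite inE /= in_itv /= => /andP[et _].
    apply: cont_W PO _; lra.
  rewrite -!powR_pos //.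
  apply/andP; split.
    rewrite ge_min; apply/orP; left; lra.
  by rewrite le_max VX orbT.
move: cin; rewrite in_itv /= => /andP[ec _].
exists c; split; first lra.
by rewrite powR_pos //; lra.
Unshelve. all: by end_near.
Qed.
End An3.
Section An4.
Variable R : realType.

Lemma step5 (vr : R -> R) (s k0 d b g R0 lM B r l : R) :
  0 < s -> 0 < d -> d <= k0 / 2 -> 0 < k0 -> 0 < l ->
  b = (k0 + d)^-1 -> g = (k0 - d)^-1 ->
  (forall e, `|e| <= d -> (k0 + e) * ln (k0 + e) - (k0 + e) * ln s - (k0 + e) <= lM) ->
  (forall x y, R0 <= x -> x <= y ->
    b * (ln y - ln x) <= vr y * ln y - vr x * ln x <= g * (ln y - ln x)) ->
  R0 <= B -> R0 <= r -> ln l <= vr B * ln B ->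
  l * ln r - s * expR (vr r * ln r) <= l * ln B + l * lM.
Proof.
move=> s0 d0 dk k00 l0 bE gE Hh HG RB Rr lB.
set t := vr r * ln r - vr B * ln B.
have [k [kpos [kd kt]]] : exists k, 0 < k /\ `|k - k0| <= d /\ ln r - ln B <= k * t.
  case: (lerP B r) => Br.
    exists (k0 + d); split; first lra.
    split; first by rewrite addrC addKr ger0_norm //; lra.
    have [/= H1 _] := andP (HG B r RB Br).
    have := ler_wpM2l (ltW (_ : 0 < k0 + d)) H1; rewrite bE mulrA mulfV ?mul1r; last lra.
    by move=> /(_ ltac:(lra)).
  exists (k0 - d); split; first lra.
  split; first by rewrite (_ : k0 - d - k0 = - d); [rewrite normrN ger0_norm //; lra | ring].
  have [/= _ H2] := andP (HG r B Rr (ltW Br)).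
  have : - t <= g * (ln B - ln r) by rewrite /t; lra.
  move=> H3; have := ler_wpM2l (ltW (_ : 0 < k0 - d)) H3; rewrite gE mulrA mulfV ?mul1r; last lra.
  by move=> /(_ ltac:(lra)); lra.
have eB : l <= expR (vr B * ln B).
  by rewrite -[l in l <= _]lnK ?posrE // ler_expR.
have Er : expR (vr r * ln r) = expR (vr B * ln B) * expR t by rewrite -expRD /t; congr expR; ring.
have Ki := key_ineq t kpos s0.
have Hk : k * ln k - k * ln s - k <= lM.
  move: (Hh (k - k0) kd); rewrite (_ : k0 + (k - k0) = k); [lra | ring].
have et0 : 0 < expR t := expR_gt0 t.
have A1 : s * (l * expR t) <= s * expR (vr r * ln r).
  rewrite Er; apply: ler_wpM2l; first exact: ltW.
  by apply: ler_wpM2r => //; exact: ltW.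
have A2 : l * (ln r - ln B) <= l * (k * t) by apply: ler_wpM2l => //; exact: ltW.
have A3 : l * (k * t - s * expR t) <= l * lM.
  by apply: ler_wpM2l; [exact: ltW | lra].
nra.
Qed.
End An4.
Section An5.
Variable R : realType.

Lemma final_K (T a a1 M R0 Bm D C : R) (l N : nat) :
  0 < a1 -> a1 <= a -> 0 < M -> 0 < R0 -> R0 <= T -> R0 / M <= T ->
  Bm = Num.max a R0 -> D = Num.max R0 (Bm * M) -> C = Num.max 1 ((T / a1) ^+ N) ->
  (0 < l)%N -> (a < T -> (l <= N)%N) ->
  D ^+ l <= C * (a ^+ l * M ^+ l).
Proof.
move=> a10 a1a M0 R00 RT RMT BmE DE CE l0 lN.
have a0 : 0 < a := lt_le_trans a10 a1a.
have C1 : 1 <= C by rewrite CE le_max lexx.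
have aM0 : 0 <= a ^+ l * M ^+ l by rewrite -exprMn exprn_ge0 // ltW // mulr_gt0.
case: (leP T a) => Ta.
  have Bma : Bm = a by rewrite BmE; apply/max_idPl; exact: le_trans Ta.
  have RaM : R0 <= a * M by rewrite -ler_pdivrMr //; exact: le_trans Ta.
  have -> : D = a * M by rewrite DE Bma; apply/max_idPr.
  by rewrite exprMn; apply: ler_peMl.
have T0 : 0 < T := lt_le_trans R00 RT.
have RTM : R0 <= T * M by rewrite -ler_pdivrMr.
have BmT : Bm <= T by rewrite BmE ge_max RT andbT ltW.
have DTM : D <= T * M by rewrite DE ge_max RTM /= ler_wpM2r // ltW.
have D0 : 0 <= D by rewrite DE le_max (ltW R00).
have TaM : T * M = (T / a) * (a * M) by rewrite mulrA divfK // gt_eqF.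
have Ta1 : 1 <= T / a by rewrite ler_pdivlMr // mul1r ltW.
have Taa1 : T / a <= T / a1.
  by rewrite ler_pdivrMr // mulrAC ler_pdivlMr // ler_wpM2l // ltW.
have K : (T / a) ^+ l <= C.
  apply: le_trans (_ : (T / a1) ^+ N <= C); last by rewrite CE le_max lexx orbT.
  apply: le_trans (_ : (T / a1) ^+ l <= _).
    rewrite ler_pXn2r // ?nnegrE //.
    - exact: le_trans ler01 Ta1.
    - exact: le_trans ler01 (le_trans Ta1 Taa1).
  by apply: ler_weXn2l; [exact: le_trans Taa1 | exact: lN].
apply: le_trans (_ : (T * M) ^+ l <= _).
  by rewrite ler_pXn2r // nnegrE // mulr_ge0 // ltW.
by rewrite TaM exprMn [(a * M) ^+ l]exprMn; apply: ler_wpM2r.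
Qed.
End An5.
Section An6.
Variable R : realType.

Lemma le_powR_mono (vr : R -> R) a b : normalized_po vr -> 0 < a -> a <= b ->
  a `^ vr a <= b `^ vr b.
Proof.
move=> NO a0 ab; case: (ltgtP a b) ab => // [aB _| <- _]; last exact: lexx.
by apply: ltW; exact: (proj1 NO) a b a0 aB.
Qed.

Lemma main_bound (vr : R -> R) rho s s' : proximate_order vr rho -> normalized_po vr ->
  0 < s' -> s' < s ->
  exists2 C : R, 1 <= C & forall (l : nat) (r : R), (0 < l)%N -> 0 <= r ->
    r ^+ l * expR (- (s * r `^ vr r)) <=
    C * (po_inv vr l%:R ^+ l * expR (l%:R * (- (1 + ln rho + ln s') / rho))).
Proof.
move=> PO NO s'0 ss'.
have rho0 : 0 < rho by case: PO => _ [_ [_ [? _]]].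
have s0 : 0 < s := lt_trans s'0 ss'.
set k0 := rho^-1.
have k00 : 0 < k0 by rewrite invr_gt0.
have [d d0 [dk Hh]] := cont_h k00 s'0 ss'.
set lM := - (1 + ln rho + ln s') / rho.
have HlM : k0 * ln k0 - k0 * ln s' - k0 = lM.
  rewrite /k0 lnV ?posrE // /lM; field; exact: lt0r_neq0.
have Hh' e : `|e| <= d -> (k0 + e) * ln (k0 + e) - (k0 + e) * ln s - (k0 + e) <= lM.
  by rewrite -HlM; exact: Hh.
have kd1 : 0 < k0 + d by rewrite addr_gt0.
have kd2 : 0 < k0 - d by rewrite subr_gt0; apply: le_lt_trans dk _; rewrite ltr_pdivrMr // ltr_pMr // ltr1n.
set b := (k0 + d)^-1.
set g := (k0 - d)^-1.
have brho : b < rho by rewrite /b -[rho]invrK ltf_pV2 ?posrE // ltrDl.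
have rhog : rho < g by rewrite /g -[rho]invrK ltf_pV2 ?posrE // gtrDl oppr_lt0.
have [R0 R01 HG] := po_growth PO brho rhog.
have R00 : 0 < R0 := lt_le_trans ltr01 R01.
set M := expR lM.
have M0 : 0 < M := expR_gt0 lM.
set T := Num.max R0 (R0 / M).
have RT : R0 <= T by rewrite le_max lexx.
have RMT : R0 / M <= T by rewrite le_max lexx orbT.
have T0 : 0 < T := lt_le_trans R00 RT.
have [a1pos Va1] := po_inv_spec PO NO (lexx (1 : R)).
set a1 := po_inv vr 1 in a1pos Va1 *.
set N := Num.Def.archi_bound (T `^ vr T).
have hN : T `^ vr T < N%:R by apply: archi_boundP; exact: powR_ge0.
exists (Num.max 1 ((T / a1) ^+ N)); first by rewrite le_max lexx.
move=> l r l0 r0.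
have l1 : 1 <= (l%:R : R) by rewrite ler1n.
have lpos : 0 < (l%:R : R) by rewrite ltr0n.
have [apos Va] := po_inv_spec PO NO l1.
set a := po_inv vr l%:R in apos Va *.
have ElM : expR (l%:R * lM) = M ^+ l by rewrite expRM_natl.
rewrite ElM.
set Bm := Num.max a R0.
set D := Num.max R0 (Bm * M).
have a1a : a1 <= a by apply: (V_le NO a1pos apos); rewrite Va Va1.
have lN : a < T -> (l <= N)%N.
  move=> Ta; have : (l%:R : R) < N%:R.
    rewrite -Va; apply: le_lt_trans hN; apply: ltW; exact: (proj1 NO) a T apos Ta.
  by rewrite ltr_nat => /ltnW.
have FK := final_K a1pos a1a M0 R00 RT RMT erefl erefl erefl l0 lN.
apply: le_trans FK.
case: (eqVneq r 0) => [->|rn0].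
  rewrite expr0n (gtn_eqF l0) mul0r; apply: exprn_ge0.
  by rewrite le_max (ltW R00).
have rpos : 0 < r by rewrite lt_neqAle eq_sym rn0.
have aBm : a <= Bm by rewrite le_max lexx.
have RBm : R0 <= Bm by rewrite le_max lexx orbT.
have Bm0 : 0 < Bm := lt_le_trans R00 RBm.
have VBm : ln l%:R <= vr Bm * ln Bm.
  have : l%:R <= Bm `^ vr Bm by rewrite -Va; exact: le_powR_mono.
  by rewrite powR_pos // -ler_expR lnK // posrE.
have D0 : 0 < D by rewrite lt_max R00.
have Hmain : l%:R * ln r - s * expR (vr r * ln r) <= l%:R * ln D.
  have e0 : 0 <= s * expR (vr r * ln r) by rewrite mulr_ge0 // ?ltW // expR_gt0.
  case: (ltP r R0) => rR.
    have H : ln r <= ln D.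
      rewrite ler_ln ?posrE //; apply: le_trans (ltW rR) _; by rewrite le_max lexx.
    rewrite lerBlDr; apply: le_trans (ler_wpM2l (ltW lpos) H) _.
    by rewrite lerDl.
  have H5 := step5 s0 d0 dk k00 lpos erefl erefl Hh' HG RBm rR VBm.
  apply: le_trans H5 _.
  have : ln Bm + lM <= ln D.
    rewrite -[lM]expRK -lnM ?posrE // ler_ln ?posrE ?mulr_gt0 //.
    by rewrite le_max lexx orbT.
  by move=> H; rewrite -mulrDr; apply: ler_wpM2l => //; exact: ltW.
have Er : r ^+ l = expR (l%:R * ln r) by rewrite expRM_natl lnK // posrE.
have ED : D ^+ l = expR (l%:R * ln D) by rewrite expRM_natl lnK // posrE.
by rewrite Er ED powR_pos // -expRD ler_expR.
Qed.
End An6.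
Lemma cardE_cl (T : finType) (b : T -> bool) : #|[set p : T | b p]| = #|[pred p | b p]|.
Proof. apply: eq_card => p; rewrite !inE /=. by apply/idP/idP; rewrite in_setE. Qed.

Local Close Scope classical_set_scope.
Section Cl.
Variables (R : realType) (n : nat).
Implicit Types (x y : 'rV[R]_(n.+1)).

Lemma set1_n0 (k : 'I_n) : [set k] != finset.set0.
Proof. by apply/eqP => h; have := set11 k; rewrite h inE. Qed.

Lemma pv0 x : paravec x finset.set0 = x ord0 ord0.
Proof. by rewrite /paravec ffunE eqxx. Qed.

Lemma pv1 x (k : 'I_n) : paravec x [set k] = x ord0 (lift ord0 k).
Proof.
rewrite /paravec ffunE (negbTE (set1_n0 k)).
case: pickP => [j|/(_ k)]; last by rewrite set11.
by rewrite finset.in_set1 => /eqP ->; rewrite eqxx.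
Qed.

Lemma pvO x (A : {set 'I_n}) : A != finset.set0 -> (forall k, A != [set k]) -> paravec x A = 0.
Proof.
move=> A0 Ak; rewrite /paravec ffunE (negbTE A0).
by case: pickP => // j _; rewrite (negbTE (Ak j)).
Qed.

Lemma set_tri (A : {set 'I_n}) :
  A = finset.set0 \/ (exists k, A = [set k]) \/ (A != finset.set0 /\ forall k, A != [set k]).
Proof.
have [->|A0] := eqVneq A finset.set0; first by left.
right; case: (pselect (exists k, A = [set k])) => [h|h]; first by left.
right; split => // k; apply/eqP => Ak; apply: h; by exists k.
Qed.

Lemma sum_pv (F : {set 'I_n} -> R -> R) x : (forall A, F A 0 = 0) ->
  \sum_(A : {set 'I_n}) F A (paravec x A) =
  F finset.set0 (x ord0 ord0) + \sum_(i < n) F [set i] (x ord0 (lift ord0 i)).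
Proof.
move=> F0.
rewrite (bigD1 finset.set0) //= pv0; congr (_ + _).
rewrite (bigID (fun A => A \in [set [set i] | i : 'I_n])) /=.
rewrite [X in _ + X]big1 ?addr0; last first.
  move=> A /andP[A0 /imsetP An]; rewrite pvO ?F0 //.
  by move=> k; apply/eqP => Ak; apply: An; exists k.
rewrite (eq_bigl (fun A => A \in [set [set i] | i : 'I_n])); last first.
  move=> A; apply/andP/idP => [[]//|/[dup] /imsetP [k _ ->] ->]; split => //.
  exact: set1_n0.
rewrite big_imset /=; last by move=> i j _ _; apply: set1_inj.
by apply: eq_bigr => i _; rewrite pv1.
Qed.
Lemma sign0l (B : {set 'I_n}) : cl_sign R finset.set0 B = 1 :> R.
Proof.
rewrite /cl_sign cardE_cl finset.set0I cards0 (eq_card (B := pred0)); last by move=> p; rewrite !inE.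
by rewrite card0 expr0.
Qed.

Lemma sign0r (B : {set 'I_n}) : cl_sign R B finset.set0 = 1 :> R.
Proof.
rewrite /cl_sign cardE_cl finset.setI0 cards0 (eq_card (B := pred0)); last by move=> p; rewrite !inE andbF.
by rewrite card0 expr0.
Qed.

Lemma sd0l (B : {set 'I_n}) : symdiff finset.set0 B = B.
Proof. by rewrite /symdiff finset.set0D finset.setD0 finset.set0U. Qed.
Lemma sd0r (B : {set 'I_n}) : symdiff B finset.set0 = B.
Proof. by rewrite /symdiff finset.set0D finset.setD0 finset.setU0. Qed.
Lemma sdC (A B : {set 'I_n}) : symdiff A B = symdiff B A.
Proof. by rewrite /symdiff finset.setUC. Qed.

Lemma sign11 (i j : 'I_n) : cl_sign R [set i] [set j] =
  (-1) ^+ ((j < i)%N + (i == j)) :> R.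
Proof.
rewrite /cl_sign cardE_cl; congr (_ ^+ _); congr (_ + _).
  case: (ltnP j i) => ji.
    rewrite [RHS]/= -(cards1 (i, j)); apply: eq_card => -[a b]; rewrite !inE /= xpair_eqE.
    by case: (a =P i) => [->|]; case: (b =P j) => [->|] //=; rewrite ji.
  rewrite [RHS]/= -(card0 ('I_n * 'I_n)%type); apply: eq_card => -[a b]; rewrite !inE /=.
  by case: (a =P i) => [->|]; case: (b =P j) => [->|] //=; rewrite ltnNge ji.
case: (i =P j) => [->|ij]; first by rewrite finset.setIid cards1.
have -> : [set i] :&: [set j] = finset.set0.
  by apply/setP => a; rewrite !inE; case: (a =P i) => [->|] //=; apply/eqP.
by rewrite cards0.
Qed.

Lemma anticomm (i j : 'I_n) (C : {set 'I_n}) :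
  (if symdiff [set i] [set j] == C then cl_sign R [set i] [set j] else 0) +
  (if symdiff [set j] [set i] == C then cl_sign R [set j] [set i] else 0) =
  (if (i == j) && (C == finset.set0) then -2 else 0 : R).
Proof.
rewrite [symdiff [set j] _]sdC !sign11.
case: (i =P j) => [<-|ij] /=.
  have -> : symdiff [set i] [set i] = finset.set0 by rewrite /symdiff finset.setDv finset.setU0.
  rewrite eq_sym ltnn eqxx /=; case: (C =P _) => _ //; first by rewrite expr1; lra.
  by rewrite addr0.
have -> : (j == i) = false by apply/eqP => h; apply: ij.
case: (symdiff _ _ == C); last by rewrite addr0.
rewrite !addn0; case: (ltngtP i j) => h /=.
- by rewrite expr0 expr1; lra.
- by rewrite expr0 expr1; lra.
- by exfalso; apply: ij; apply: val_inj.
Qed.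

Definition mk x (p q : R) : 'rV[R]_(n.+1) :=
  \row_(j < n.+1) (if j == ord0 then p else q * x ord0 j).
Definition sv x : R := \sum_(i < n) x ord0 (lift ord0 i) ^+ 2.

Lemma mk0 x p q : mk x p q ord0 ord0 = p.
Proof. by rewrite /mk mxE eqxx. Qed.
Lemma mkl x p q (i : 'I_n) : mk x p q ord0 (lift ord0 i) = q * x ord0 (lift ord0 i).
Proof. by rewrite /mk mxE eq_sym (negbTE (neq_lift _ _)). Qed.

Lemma pv_mul x p q : cl_mul (paravec x) (paravec (mk x p q)) =
  paravec (mk x (x ord0 ord0 * p - sv x * q) (x ord0 ord0 * q + p)).
Proof.
apply/ffunP => C; rewrite ffunE.
rewrite (@sum_pv (fun A t => \sum_(B : {set 'I_n}) (if symdiff A B == C then cl_sign R A B * t * paravec (mk x p q) B else 0))); last first.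
  by move=> A; apply: big1 => B _; case: ifP => // _; rewrite mulr0 mul0r.
rewrite /=.
have inner A a : \sum_(B : {set 'I_n}) (if symdiff A B == C then cl_sign R A B * a * paravec (mk x p q) B else 0)
  = (if symdiff A finset.set0 == C then cl_sign R A finset.set0 * a * p else 0) +
    \sum_(j < n) (if symdiff A [set j] == C then cl_sign R A [set j] * a * (q * x ord0 (lift ord0 j)) else 0).
  rewrite (@sum_pv (fun B t => if symdiff A B == C then cl_sign R A B * a * t else 0)); last first.
    by move=> B; case: ifP => // _; rewrite mulr0.
  by rewrite mk0; congr (_ + _); apply: eq_bigr => j _; rewrite mkl.
rewrite inner.
under [X in _ + _ + X]eq_bigr do rewrite inner sd0r sign0r mul1r.
rewrite big_split /= sd0l !sign0l mul1r.
under eq_bigr do rewrite sd0l sign0l mul1r.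
have HS : \sum_(i < n) \sum_(j < n) (if symdiff [set i] [set j] == C then cl_sign R [set i] [set j] * x ord0 (lift ord0 i) * (q * x ord0 (lift ord0 j)) else 0)
   = if C == finset.set0 then - (sv x * q) else 0.
  set S := (LHS).
  have E1 : S = \sum_(i < n) \sum_(j < n) (if symdiff [set j] [set i] == C then cl_sign R [set j] [set i] * x ord0 (lift ord0 j) * (q * x ord0 (lift ord0 i)) else 0).
    by rewrite /S exchange_big.
  have E2 : S + S = \sum_(i < n) (q * x ord0 (lift ord0 i) ^+ 2 * (if C == finset.set0 then -2 else 0)).
    have key (i j : 'I_n) : (if symdiff [set i] [set j] == C then cl_sign R [set i] [set j] * x ord0 (lift ord0 i) * (q * x ord0 (lift ord0 j)) else 0) + (if symdiff [set j] [set i] == C then cl_sign R [set j] [set i] * x ord0 (lift ord0 j) * (q * x ord0 (lift ord0 i)) else 0) = q * x ord0 (lift ord0 i) * x ord0 (lift ord0 j) * (if (i == j) && (C == finset.set0) then -2 else 0).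
      rewrite -anticomm; do 2 case: ifP => _; ring.
    rewrite {2}E1 -big_split /=; apply: eq_bigr => i _; rewrite -big_split /=.
    under eq_bigr do rewrite key.
    rewrite (bigD1 i) //= big1 ?addr0; last first.
      by move=> j ji; rewrite eq_sym (negbTE ji) /= mulr0.
    by rewrite eqxx /=; case: ifP => _; ring.
  have : S + S = (if C == finset.set0 then -2 else 0) * (sv x * q).
    rewrite E2 /sv mulr_suml mulr_sumr; apply: eq_bigr => i _; ring.
  by case: ifP => _ H; lra.
rewrite HS.
case: (set_tri C) => [->|[[k ->]|[C0 Ck]]].
- rewrite pv0 mk0 eqxx !big1 ?addr0 ?add0r //; by move=> j _; rewrite (negbTE (set1_n0 j)).
- rewrite pv1 mkl [finset.set0 == _]eq_sym (negbTE (set1_n0 k)) addr0 add0r.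
  rewrite (bigD1 k) //= eqxx big1 ?addr0; last first.
    by move=> j jk; case: eqP => // /set1_inj h; rewrite h eqxx in jk.
  rewrite (bigD1 k) //= eqxx big1 ?addr0; last first.
    by move=> j jk; case: eqP => // /set1_inj h; rewrite h eqxx in jk.
  ring.
- rewrite pvO // [finset.set0 == _]eq_sym (negbTE C0) add0r addr0.
  rewrite !big1 ?addr0 // => j _; by rewrite eq_sym (negbTE (Ck j)).
Qed.

Fixpoint PQ x (l : nat) : R * R :=
  if l is l'.+1 then
    ((x ord0 ord0 * (PQ x l').1 - sv x * (PQ x l').2), (x ord0 ord0 * (PQ x l').2 + (PQ x l').1))
  else (1, 0).

Lemma pow_pv x l : cl_pow (paravec x) l = paravec (mk x (PQ x l).1 (PQ x l).2).
Proof.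
elim: l => [|l IH].
  apply/ffunP => C; rewrite /cl_pow /= /cl_one ffunE.
  case: (set_tri C) => [->|[[k ->]|[C0 Ck]]].
  - by rewrite pv0 mk0 eqxx.
  - by rewrite pv1 mkl (negbTE (set1_n0 k)) mul0r.
  - by rewrite pvO // (negbTE C0).
by rewrite /cl_pow iterS -/(cl_pow _ l) IH pv_mul.
Qed.

Lemma norm_pv y : cl_norm (paravec y) = eucl y.
Proof.
rewrite /cl_norm /eucl (@sum_pv (fun A t => t ^+ 2)); last by move=> A; rewrite expr0n.
by rewrite big_ord_recl.
Qed.

Lemma norm_pow x l : cl_norm (cl_pow (paravec x) l) = eucl x ^+ l.
Proof.
rewrite pow_pv norm_pv /eucl big_ord_recl mk0.
under eq_bigr do rewrite mkl exprMn.
rewrite -mulr_sumr -/(sv x).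
have inv : (PQ x l).1 ^+ 2 + (PQ x l).2 ^+ 2 * sv x = (x ord0 ord0 ^+ 2 + sv x) ^+ l.
  elim: l => [|l IH] /=; first by rewrite expr0 expr1n expr0n /=; ring.
  by rewrite [RHS]exprS -IH; ring.
have sv0 : 0 <= sv x by apply: sumr_ge0 => i _; exact: sqr_ge0.
rewrite inv.
have a0 : 0 <= x ord0 ord0 ^+ 2 + sv x by apply: addr_ge0 => //; exact: sqr_ge0.
have -> : (x ord0 ord0 ^+ 2 + sv x) ^+ l = (Num.sqrt (x ord0 ord0 ^+ 2 + sv x) ^+ l) ^+ 2.
  by rewrite exprAC sqr_sqrtr.
rewrite sqrtr_sqr ger0_norm ?exprn_ge0 ?sqrtr_ge0 //.
by rewrite big_ord_recl -/(sv x).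
Qed.
End Cl.
Local Open Scope classical_set_scope.
Unset Implicit Arguments.
Theorem lemma3p10 (R : realType) (n : nat) (vr : R -> R) (rho : R) :
  proximate_order vr rho -> normalized_po vr ->
  forall sigma sigma' : R, 0 < sigma' -> sigma' < sigma ->
  exists C : R, forall l : nat,
    (po_norm vr sigma (fun x : 'rV[R]_(n.+1) => cl_pow (paravec x) l)
      <= (C * (G_po vr rho l / sigma' `^ (l%:R / rho)))%:E)%E.
Proof.
move=> PO NO s s' s'0 ss'.
have rho0 : 0 < rho by case: PO => _ [_ [_ [? _]]].
have [C C1 HC] := main_bound PO NO s'0 ss'.
exists C => l.
apply: ge_ereal_sup => _ [x _ <-].
rewrite lee_fin norm_pow.
have r0 : 0 <= eucl x by exact: sqrtr_ge0.
rewrite /G_po; case: l => [|l] /=.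
  rewrite expr0 mul1r mul0r powRr0 divr1 mulr1.
  apply: le_trans C1; rewrite -expR0 ler_expR oppr_le0.
  by apply: mulr_ge0; [exact: ltW (lt_trans s'0 ss') | exact: powR_ge0].
apply: le_trans (HC l.+1 (eucl x) isT r0) _.
rewrite ler_pM2l; last exact: lt_le_trans ltr01 C1.
have e0 : 0 < expR 1 * rho by rewrite mulr_gt0 // expR_gt0.
rewrite !powR_pos // lnM ?posrE ?expR_gt0 // expRK.
rewrite -mulrA; apply: ler_wpM2l.
  have l1 : (1 : R) <= l.+1%:R by rewrite ler1n.
  have [ap _] := po_inv_spec PO NO l1.
  by apply: exprn_ge0; exact: ltW.
rewrite le_eqVlt; apply/orP; left; apply/eqP.
rewrite -!expRN -expRD; congr expR.
field; exact: lt0r_neq0.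
Qed.
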